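(* Let $\Lambda$ be a Legendrian knot. (i) If $4|\operatorname{rot}(\Lambda)|+\operatorname{tb}(\Lambda)\ge0$, then $m(\Lambda)\ge\left\lceil\sqrt{4|\operatorname{rot}(\Lambda)|+\operatorname{tb}(\Lambda)}\right\rceil$. (ii) If $\operatorname{tb}(\Lambda)\le0$, then $m(\Lambda)\ge\left\lceil\sqrt{-\operatorname{tb}(\Lambda)}\right\rceil$. More precisely, if $\Lambda$ is depicted by a suitably connected Legendrian $n$-mosaic, then $n^2\ge4|\operatorname{rot}(\Lambda)|+\operatorname{tb}(\Lambda)$ and $n^2\ge-\operatorname{tb}(\Lambda)$.
   Context: Legendrian knots are taken in the standard contact structure on $\mathbb{R}^3$ and represented by front ($xz$-) projections, which have cusps in place of vertical tangencies and in which the strand of more negative slope is the overstrand at every crossing. For an oriented front with $P$ positive crossings, $N$ negative crossings, $C$ cusps, $D$ downward-oriented and $U$ upward-oriented cusps, $\operatorname{tb}=P-N-\frac12C$ and $\operatorname{rot}=\frac12(D-U)$. Legendrian mosaic tiles: a square tile whose four edge midpoints are potential connection points; the tiles are $T_0$ (empty); $T_1,\dots,T_4$ (a single arc joining midpoints of two adjacent edges, one per pair of adjacent edges); $T_5,T_6$ (a segment joining midpoints of opposite edges); $T_7,T_8$ (two disjoint arcs each joining adjacent edges, using all four midpoints); $T_{10}$ (two crossing segments joining opposite edges). A Legendrian $n$-mosaic is an $n\times n$ array of these tiles with the array rotated $45^\circ$ counterclockwise so the strands form a front diagram (after rotation $T_2$, $T_4$ contain one cusp and $T_8$ two cusps;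 $T_1,T_3,T_7$ contain none; in $T_{10}$ the negative-slope strand is over). It is suitably connected if connection points agree across shared edges and none lies on the outer boundary. The mosaic number $m(\Lambda)$ is the smallest $n$ such that some suitably connected Legendrian $n$-mosaic depicts a front of a Legendrian knot Legendrian isotopic to $\Lambda$. *)

(* Defs.v *)
From mathcomp Require Import all_boot all_order all_algebra.
Set Implicit Arguments. Unset Strict Implicit. Unset Printing Implicit Defensive.
Import Order.TTheory GRing.Theory Num.Theory.

(* After rotating the tile 45 degrees CCW: N -> upper-left edge,
   E -> upper-right edge, S -> lower-right edge, W -> lower-left edge. *)
Definition eN := 0%N.
Definition eE := 1%N.
Definition eS := 2%N.
Definition eW := 3%N.

Inductive tile := T0 | T1 | T2 | T3 | T4 | T5 | T6 | T7 | T8 | T10.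

(* After rotation: {W,N} (T4) is a right cusp, {E,S} (T2) a left cusp,
   {N,E} (T3) and {S,W} (T1) are cusp-free arcs; N-S (T5) has negative
   slope, E-W (T6) positive slope; T7 has the two cusp-free arcs, T8 the
   two cusped arcs; T10 is a crossing of N-S (negative slope, OVER) and
   E-W (positive slope, under). *)
Definition segs (t : tile) : seq (nat * nat) :=
  match t with
  | T0 => [::]
  | T1 => [:: (eS, eW)]
  | T2 => [:: (eE, eS)]
  | T3 => [:: (eN, eE)]
  | T4 => [:: (eW, eN)]
  | T5 => [:: (eN, eS)]
  | T6 => [:: (eE, eW)]
  | T7 => [:: (eN, eE); (eS, eW)]
  | T8 => [:: (eW, eN); (eE, eS)]
  | T10 => [:: (eN, eS); (eE, eW)]
  end.

Definition isT10 (t : tile) : bool := if t is T10 then true else false.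

Definition hasEdge (t : tile) (e : nat) : bool :=
  has (fun p : nat * nat => (p.1 == e) || (p.2 == e)) (segs t).

(* A Legendrian n-mosaic: row i (top to bottom), column j (left to right). *)
Definition mosaic (n : nat) := 'I_n -> 'I_n -> tile.

Definition tile_at n (M : mosaic n) (i j : nat) : tile :=
  match (insub i : option 'I_n), (insub j : option 'I_n) with
  | Some a, Some b => M a b
  | _, _ => T0
  end.

Definition suitably_connected n (M : mosaic n) : Prop :=
  (forall i j, i < n -> j < n ->
     hasEdge (tile_at M i j) eE = hasEdge (tile_at M i j.+1) eW /\
     hasEdge (tile_at M i j) eS = hasEdge (tile_at M i.+1 j) eN) /\
  (forall j, ~~ hasEdge (tile_at M 0 j) eN) /\
  (forall i, ~~ hasEdge (tile_at M i 0) eW).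

(* A visit of an oriented strand segment: ((row, column), (entry edge, exit edge)). *)
Definition visit := ((nat * nat) * (nat * nat))%type.

Definition step (p : nat * nat) (e : nat) : nat * nat :=
  if e == eN then (p.1.-1, p.2)
  else if e == eE then (p.1, p.2.+1)
  else if e == eS then (p.1.+1, p.2)
  else (p.1, p.2.-1).

Definition opp_edge (e : nat) : nat := (e + 2) %% 4.

Definition seg_ok n (M : mosaic n) (v : visit) : bool :=
  let t := tile_at M v.1.1 v.1.2 in
  ((v.2.1, v.2.2) \in segs t) || ((v.2.2, v.2.1) \in segs t).

Definition linked (v w : visit) : bool :=
  (w.1 == step v.1 v.2.2) && (w.2.1 == opp_edge v.2.2).

(* s is an oriented traversal of the whole front depicted by M as a single
   closed curve (so the mosaic depicts a knot, with an orientation):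
   s is a nonempty cyclic sequence of consecutive oriented segments, and
   every segment of every tile is traversed exactly once. *)
Definition knot_traversal n (M : mosaic n) (s : seq visit) : Prop :=
  [/\ s != [::], all (seg_ok M) s, cycle linked s &
      forall i j a b, i < n -> j < n -> (a, b) \in segs (tile_at M i j) ->
        count (fun v : visit => (v.1 == (i, j)) &&
                 ((v.2 == (a, b)) || (v.2 == (b, a)))) s = 1].

Definition cusps (s : seq visit) : nat :=
  count (fun v : visit => v.2 \in [:: (eW, eN); (eN, eW); (eE, eS); (eS, eE)]) s.
(* Downward-oriented cusps: from upper-left to lower-left edge (N -> W), or
   from upper-right to lower-right edge (E -> S). *)
Definition down_cusps (s : seq visit) : nat :=
  count (fun v : visit => v.2 \in [:: (eN, eW); (eE, eS)]) s.
Definition up_cusps (s : seq visit) : nat :=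
  count (fun v : visit => v.2 \in [:: (eW, eN); (eS, eE)]) s.

(* With the
   usual convention (positive iff det(over direction, under direction) > 0,
   rotation preserving orientation), the crossing is positive iff
   (over goes N->S and under goes W->E) or (over goes S->N and under E->W). *)
Definition pos_crossing (s : seq visit) (i j : nat) : bool :=
  (((i, j), (eN, eS)) \in s) == (((i, j), (eW, eE)) \in s).

Definition num_pos n (M : mosaic n) (s : seq visit) : nat :=
  \sum_(i < n) \sum_(j < n) (isT10 (M i j) && pos_crossing s i j).
Definition num_neg n (M : mosaic n) (s : seq visit) : nat :=
  \sum_(i < n) \sum_(j < n) (isT10 (M i j) && ~~ pos_crossing s i j).

Local Open Scope ring_scope.

Definition tbL n (M : mosaic n) (s : seq visit) : rat :=
  (num_pos M s)%:R - (num_neg M s)%:R - (cusps s)%:R / 2.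
Definition rotL (s : seq visit) : rat :=
  ((down_cusps s)%:R - (up_cusps s)%:R) / 2.

(* Main.v *)
Require Import Defs.
From mathcomp Require Import all_boot all_order all_algebra.
From mathcomp Require Import zify lra.
Import Order.TTheory GRing.Theory Num.Theory.
Set Implicit Arguments. Unset Strict Implicit. Unset Printing Implicit Defensive.

Lemma count_split (T : Type) (a b c : pred T) s : (forall x, ~~ (b x && c x)) ->
  count (fun x => a x && (b x || c x)) s =
  (count (fun x => a x && b x) s + count (fun x => a x && c x) s)%N.
Proof.
move=> H; elim: s => //= x s ->; have := H x.
by case: (a x); case: (b x); case: (c x) => //= _; lia.
Qed.

Local Open Scope ring_scope.

Definition ey (e : nat) : int := if (e == 0%N) || (e == 1%N) then 1 else -1.
Definition dyf (p : nat * nat) : int := ey p.2 - ey p.1.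
Definition Dwf (p : nat*nat) : int := (nat_of_bool (p \in [:: (eN, eW); (eE, eS)]))%:Z.
Definition Uwf (p : nat*nat) : int := (nat_of_bool (p \in [:: (eW, eN); (eS, eE)]))%:Z.
Definition Cwf (p : nat*nat) : int :=
  (nat_of_bool (p \in [:: (eW, eN); (eN, eW); (eE, eS); (eS, eE)]))%:Z.
Definition ddf p := dyf p + 2 * (Dwf p - Uwf p).
Definition swp (p : nat*nat) := (p.2, p.1).
Definition segs2 t := segs t ++ map swp (segs t).

Lemma count_int (T : Type) (a : pred T) s :
  (count a s)%:Z = \sum_(x <- s) (nat_of_bool (a x))%:Z.
Proof. elim: s => [|x s IH]; first by rewrite big_nil. by rewrite big_cons /= PoszD IH. Qed.

Lemma CDU p : Cwf p = Dwf p + Uwf p.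
Proof.
case: p => a b; rewrite /Cwf /Dwf /Uwf.
by case: a => [|[|[|[|a]]]]; case: b => [|[|[|[|b]]]].
Qed.

Lemma path_sum (T : Type) (r : rel T) (P : pred T) (f g : T -> int) :
  (forall x y, r x y -> P x -> g y = f x) ->
  forall x q, path r x q -> all P (belast x q) ->
  \sum_(y <- belast x q) f y = \sum_(y <- q) g y.
Proof.
move=> H x q; elim: q x => [|y q IH] x /=; first by rewrite !big_nil.
move=> /andP[rxy pq] /andP[Px Pq].
by rewrite !big_cons (IH y pq Pq) (H x y rxy Px).
Qed.

Lemma cycle_sum (T : eqType) (r : rel T) (P : pred T) (f g : T -> int) s :
  (forall x y, r x y -> P x -> g y = f x) -> cycle r s -> all P s ->
  \sum_(y <- s) f y = \sum_(y <- s) g y.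
Proof.
move=> H; case: s => [|x p] /= cyc Ps; first by rewrite !big_nil.
have := path_sum H cyc; rewrite belast_rcons => ->//.
by apply: perm_big; rewrite perm_rcons.
Qed.

Lemma decomp n (s : seq visit) (F : visit -> int) :
  (forall v, v \in s -> (v.1.1 < n)%N /\ (v.1.2 < n)%N) ->
  \sum_(v <- s) F v = \sum_(i < n) \sum_(j < n) \sum_(v <- s | v.1 == (i : nat, j : nat)) F v.
Proof.
elim: s => [|x s IH] H.
  rewrite big_nil; symmetry; apply: big1 => i _; apply: big1 => j _; by rewrite big_nil.
rewrite big_cons IH; last by move=> v hv; apply: H; rewrite inE hv orbT.
have [hx1 hx2] := H x (mem_head _ _).
have E : forall (b : bool) (a r : int), (if b then a + r else r) = (if b then a else 0) + r.
  by move=> [] a r; rewrite ?add0r.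
have -> : \sum_(i < n) \sum_(j < n) \sum_(v <- x :: s | v.1 == (i : nat, j : nat)) F v =
  \sum_(i < n) (\sum_(j < n) (if x.1 == (i : nat, j : nat) then F x else 0) +
     \sum_(j < n) \sum_(v <- s | v.1 == (i : nat, j : nat)) F v).
  by apply: eq_bigr => i _; rewrite -big_split; apply: eq_bigr => j _; rewrite big_cons E.
rewrite big_split /=; congr (_ + _).
rewrite (bigD1 (Ordinal hx1)) //= [X in _ = _ + X]big1 ?addr0; last first.
  move=> i ni; apply: big1 => j _; case: eqP => // hx.
  by case/negP: ni; apply/eqP/val_inj; rewrite /= hx.
rewrite (bigD1 (Ordinal hx2)) //= [X in _ = _ + X]big1 ?addr0.
  by rewrite -surjective_pairing eqxx.
move=> j nj; case: eqP => // hx.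
by case/negP: nj; apply/eqP/val_inj; rewrite /= hx.
Qed.

Lemma loc_sum (P : pred visit) (s : seq visit) (S : seq (nat*nat)) (f : nat*nat -> int) :
  uniq S -> (forall v, v \in s -> P v -> v.2 \in S) ->
  \sum_(v <- s | P v) f v.2 =
  \sum_(p <- S) (count (fun v => P v && (v.2 == p)) s)%:Z * f p.
Proof.
move=> uS; elim: s => [|x s IH] H.
  rewrite big_nil; symmetry; apply: big1 => p _; by rewrite mul0r.
rewrite big_cons IH; last by move=> v hv; apply: H; rewrite inE hv orbT.
under [in RHS]eq_bigr => p _ do rewrite /= PoszD mulrDl.
rewrite big_split /=.
case: ifP => Px /=.
  congr (_ + _).
  have xS := H x (mem_head _ _) Px.
  rewrite (bigD1_seq x.2) //= eqxx mul1r big1 ?addr0 // => p np.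
  by rewrite eq_sym (negbTE np) mul0r.
rewrite [X in _ = X + _]big1 ?add0r // => p _; by rewrite mul0r.
Qed.
Definition Lsum t (c : nat*nat -> nat) (f : nat*nat -> int) : int :=
  \sum_(p <- segs2 t) (c p)%:Z * f p.
Definition posb t (c : nat*nat -> nat) := isT10 t && ((0 < c (0,2)) == (0 < c (3,1)))%N.
Definition negt t (c : nat*nat -> nat) := isT10 t && ~~ ((0 < c (0,2)) == (0 < c (3,1)))%N.

Lemma tile_ineq t c : (forall p, p \in segs t -> (c p + c (swp p) = 1)%N) ->
  Lsum t c Cwf + `|Lsum t c ddf| + 2 * (posb t c)%:Z - 2 * (negt t c)%:Z <= 2 /\
  Lsum t c Cwf + 2 * (negt t c)%:Z - 2 * (posb t c)%:Z <= 2.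
Proof.
move=> H; have HA : all (fun p => c p + c (swp p) == 1)%N (segs t).
  by apply/allP => p /H ->.
clear H.
case: t HA => HA; rewrite /Lsum /posb /negt /segs2 /= ?big_cons ?big_nil /=;
  rewrite /Cwf /ddf /dyf /Dwf /Uwf /ey /swp /eN /eE /eS /eW /= in HA *;
  repeat (case/andP: HA => /eqP ? HA);
  unfold eN, eE, eS, eW in *;
  rewrite ?normr0; try match goal with |- context [`|?X|] =>
    have [hX|hX] := lerP 0 X; [rewrite (ger0_norm hX) | rewrite (ltr0_norm hX)] end;
  try lia.
Qed.

Lemma uniq_segs2 t : uniq (segs2 t). Proof. by case: t. Qed.

Lemma segs_neq t p : p \in segs t -> p.1 != p.2.
Proof.
case: p => a b; case: t; rewrite /segs ?inE => h //;
  repeat (case/orP: h => h); by case/eqP: h => -> ->.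
Qed.

Lemma tile_at_in n (M : mosaic n) i j p : p \in segs (tile_at M i j) -> (i < n)%N /\ (j < n)%N.
Proof.
rewrite /tile_at; case: insubP => [a ha _|]; last by [].
by case: insubP => [b hb _|].
Qed.

Lemma tile_at_ord n (M : mosaic n) (i j : 'I_n) : tile_at M i j = M i j.
Proof. by rewrite /tile_at !valK. Qed.

Lemma hasEdge_lt4 t e : hasEdge t e -> (e < 4)%N.
Proof. by case: e => [|[|[|[|e]]]] //; case: t. Qed.

Lemma sum4 (I : Type) (r : seq I) (a b p q : I -> int) :
  \sum_(i <- r) (a i + b i + 2 * p i - 2 * q i) =
  \sum_(i <- r) a i + \sum_(i <- r) b i + 2 * \sum_(i <- r) p i - 2 * \sum_(i <- r) q i.
Proof. by rewrite !big_split /= sumrN -!mulr_sumr. Qed.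

Lemma sum3 (I : Type) (r : seq I) (a p q : I -> int) :
  \sum_(i <- r) (a i + 2 * p i - 2 * q i) =
  \sum_(i <- r) a i + 2 * \sum_(i <- r) p i - 2 * \sum_(i <- r) q i.
Proof. by rewrite !big_split /= sumrN -!mulr_sumr. Qed.

Definition Yx (v : visit) : int := 2 * ((v.1.2)%:Z - (v.1.1)%:Z) + ey v.2.2.
Definition Yn (v : visit) : int := 2 * ((v.1.2)%:Z - (v.1.1)%:Z) + ey v.2.1.

Lemma link_Y n (M : mosaic n) v w : suitably_connected M ->
  linked v w -> seg_ok M v -> Yn w = Yx v.
Proof.
move=> [_ [HN HW]].
case: v w => [[i j] [a e]] [[i' j'] [a' e']] /andP[/eqP /= hw /eqP /= ->] hok.
rewrite /Yx /Yn /=.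
have hE : hasEdge (tile_at M i j) e.
  by apply/hasP; case/orP: hok => h; [exists (a,e) | exists (e,a)] => //=; rewrite eqxx ?orbT.
move: hw; rewrite /= /step /opp_edge /eN /eE /eS /eW.
clear hok; case: e hE => [|[|[|[|e]]]] hE //=; last by have := hasEdge_lt4 hE.
- case: i hE => [|i] hE; first by move: (HN j); rewrite /eN hE.
  by case=> -> ->; rewrite /ey /=; lia.
- by case=> -> ->; rewrite /ey /=; lia.
- by case=> -> ->; rewrite /ey /=; lia.
- case: j hE => [|j] hE; first by move: (HW i); rewrite /eW hE.
  by case=> -> ->; rewrite /ey /=; lia.
Qed.

Lemma dy_sum n (M : mosaic n) s : suitably_connected M -> knot_traversal M s ->
  \sum_(v <- s) dyf v.2 = 0.
Proof.
move=> Hc [_ Hok Hcyc _].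
have E : forall v : visit, dyf v.2 = Yx v - Yn v.
  by move=> v; rewrite /dyf /Yx /Yn; lia.
rewrite (eq_bigr _ (fun v _ => E v)) sumrB.
rewrite (cycle_sum (P := seg_ok M) (r := linked) (g := Yn)) ?subrr //.
by move=> x y; apply: link_Y.
Qed.

Lemma int_main n (M : mosaic n) s : suitably_connected M -> knot_traversal M s ->
  4 * `|(down_cusps s)%:Z - (up_cusps s)%:Z| + 2 * (num_pos M s)%:Z
    - 2 * (num_neg M s)%:Z - (cusps s)%:Z <= 2 * (n ^ 2)%:Z /\
  2 * (num_neg M s)%:Z - 2 * (num_pos M s)%:Z + (cusps s)%:Z <= 2 * (n ^ 2)%:Z.
Proof.
move=> Hc Ht; have [_ Hok Hcyc Hcnt] := Ht.
have Hgrid : forall v, v \in s -> (v.1.1 < n)%N /\ (v.1.2 < n)%N.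
  move=> v /(allP Hok); rewrite /seg_ok => /orP[] h; exact: tile_at_in h.
pose c (i j : nat) p := count (fun v : visit => (v.1 == (i, j)) && (v.2 == p)) s.
have Hloc : forall (i j : 'I_n) f,
    \sum_(v <- s | v.1 == (i : nat, j : nat)) f v.2 = Lsum (M i j) (c i j) f.
  move=> i j f; rewrite /Lsum (loc_sum (S := segs2 (M i j))) ?uniq_segs2 //.
  move=> v vs /eqP vij; have := allP Hok v vs; rewrite /seg_ok vij /= tile_at_ord.
  rewrite /segs2 mem_cat => /orP[] h; first by rewrite [v.2]surjective_pairing h.
  by apply/orP; right; rewrite [v.2]surjective_pairing; apply/mapP; exists (v.2.2, v.2.1).
have Hcount : forall (i j : 'I_n) p, p \in segs (M i j) -> (c i j p + c i j (swp p) = 1)%N.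
  move=> i j [a b] hp; have hne := segs_neq hp.
  have := Hcnt i j a b (ltn_ord i) (ltn_ord j); rewrite tile_at_ord => /(_ hp).
  rewrite count_split; first by [].
  move=> v; apply/negP => /andP[/eqP -> /eqP]; case=> ha hb.
  by move: hne; rewrite /= ha hb eqxx.
have Hpos : forall (i j : 'I_n), pos_crossing s i j =
    ((0 < c i j (0,2)) == (0 < c i j (3,1)))%N.
  move=> i j; rewrite /pos_crossing /c -!has_pred1 !has_count.
  by congr (_ == _); congr (0 < _)%N; apply: eq_count => -[[? ?] [? ?]].
have Htile := fun i j => tile_ineq (Hcount i j).
have decC := decomp (fun v : visit => Cwf v.2) Hgrid.
have decD := decomp (fun v : visit => ddf v.2) Hgrid.
rewrite /= in decC decD.
have hC : (cusps s)%:Z = \sum_(v <- s) Cwf v.2 by rewrite count_int.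
have hD : (down_cusps s)%:Z = \sum_(v <- s) Dwf v.2 by rewrite count_int.
have hU : (up_cusps s)%:Z = \sum_(v <- s) Uwf v.2 by rewrite count_int.
have hCDU : (cusps s)%:Z = (down_cusps s)%:Z + (up_cusps s)%:Z.
  by rewrite hC hD hU -big_split; apply: eq_bigr => v _; rewrite CDU.
have hdd : \sum_(v <- s) ddf v.2 = 2 * ((down_cusps s)%:Z - (up_cusps s)%:Z).
  rewrite /ddf big_split /= (dy_sum Hc Ht) add0r -mulr_sumr sumrB hD hU //.
have hP : (num_pos M s)%:Z = \sum_(i < n) \sum_(j < n) (posb (M i j) (c i j))%:Z.
  rewrite /num_pos (big_morph Posz PoszD (erefl 0%:Z)); apply: eq_bigr => i _.
  rewrite (big_morph Posz PoszD (erefl 0%:Z)); apply: eq_bigr => j _.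
  by rewrite /posb Hpos.
have hN : (num_neg M s)%:Z = \sum_(i < n) \sum_(j < n) (negt (M i j) (c i j))%:Z.
  rewrite /num_neg (big_morph Posz PoszD (erefl 0%:Z)); apply: eq_bigr => i _.
  rewrite (big_morph Posz PoszD (erefl 0%:Z)); apply: eq_bigr => j _.
  by rewrite /negt Hpos.
have hCl : (cusps s)%:Z = \sum_(i < n) \sum_(j < n) Lsum (M i j) (c i j) Cwf.
  rewrite hC decC; apply: eq_bigr => i _; apply: eq_bigr => j _; exact: Hloc.
have hAbs : `|2 * ((down_cusps s)%:Z - (up_cusps s)%:Z)| <=
    \sum_(i < n) \sum_(j < n) `|Lsum (M i j) (c i j) ddf|.
  rewrite -hdd decD; apply: le_trans (ler_norm_sum _ _ _) _.
  apply: ler_sum => i _; apply: le_trans (ler_norm_sum _ _ _) _.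
  by apply: ler_sum => j _; rewrite Hloc.
have hsum2 : \sum_(i < n) \sum_(j < n) (2 : int) = 2 * (n ^ 2)%:Z.
  by rewrite !sumr_const !card_ord -mulrnA -mulr_natr; lia.
have T1 : \sum_(i < n) \sum_(j < n) (Lsum (M i j) (c i j) Cwf + `|Lsum (M i j) (c i j) ddf|
     + 2 * (posb (M i j) (c i j))%:Z - 2 * (negt (M i j) (c i j))%:Z) <= 2 * (n ^ 2)%:Z.
  rewrite -hsum2; apply: ler_sum => i _; apply: ler_sum => j _; exact: (Htile i j).1.
have T2 : \sum_(i < n) \sum_(j < n) (Lsum (M i j) (c i j) Cwf
     + 2 * (negt (M i j) (c i j))%:Z - 2 * (posb (M i j) (c i j))%:Z) <= 2 * (n ^ 2)%:Z.
  rewrite -hsum2; apply: ler_sum => i _; apply: ler_sum => j _; exact: (Htile i j).2.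
rewrite (eq_bigr _ (fun i _ => sum4 _ _ _ _ _)) sum4 -hCl -hP -hN in T1.
rewrite (eq_bigr _ (fun i _ => sum3 _ _ _ _)) sum3 -hCl -hP -hN in T2.
split; last by lia.
set z := (_ - _ : int) in hAbs *.
have hz : `|z| <= (down_cusps s)%:Z + (up_cusps s)%:Z.
  by have [h|h] := lerP 0 z; [rewrite ger0_norm | rewrite ltr0_norm] => //; rewrite /z; lia.
rewrite normrM in hAbs; move: hAbs hz T1 hCDU.
set A := \sum_(i < n) _.
move: `|z| => w. rewrite (_ : `|2 : int| = 2) //. lia.
Qed.

Theorem theorem2p5 (n : nat) (M : mosaic n) (s : seq visit) :
  suitably_connected M -> knot_traversal M s ->
  4 * `|rotL s| + tbL M s <= (n ^ 2)%:R /\ - tbL M s <= (n ^ 2)%:R.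
Proof.
move=> Hc Ht; have [I1 I2] := int_main Hc Ht.
set D := down_cusps s in I1 I2 *; set U := up_cusps s in I1 I2 *.
set C := cusps s in I1 I2 *; set P := num_pos M s in I1 I2 *.
set N := num_neg M s in I1 I2 *.
have J1 : ((4 * `|D%:Z - U%:Z| + 2 * P%:Z - 2 * N%:Z - C%:Z)%:~R : rat)
    <= (2 * (n ^ 2)%:Z)%:~R by rewrite ler_int.
have J2 : ((2 * N%:Z - 2 * P%:Z + C%:Z)%:~R : rat) <= (2 * (n ^ 2)%:Z)%:~R
  by rewrite ler_int.
rewrite ?intrD ?intrN ?intrB ?intrM ?intr_norm ?intrD ?intrN in J1.
rewrite ?intrD ?intrN ?intrB ?intrM in J2.
rewrite /rotL /tbL -/D -/U -/C -/P -/N.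
have -> : `|((D%:R - U%:R) / 2 : rat)| = `|(D%:Z)%:~R - (U%:Z)%:~R : rat| / 2.
  by rewrite normrM normfV (_ : `|2 : rat| = 2) //.
move: J1 J2; set w := `|_|.
have E : forall k : nat, ((k%:Z)%:~R : rat) = k%:R by [].
rewrite !E => J1 J2.
have w0 : 0 <= w by apply: normr_ge0.
split; lra.
Qed.
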